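(* For an integer $n>1$ define, for every integer $1<r<n$, $$E^{PD,P}_n(r)=\sum_{k=r+1}^{n}\left(1+\frac{k}{n}\right)\frac{r}{(k-1)k}\frac{\binom{k}{2}}{\binom{n}{2}}=\frac{r(n-r)(3n+1+r)}{2n^2(n-1)},$$ and let $\mathcal{M}(n)$ be a value of $r$ at which $E^{PD,P}_n$ attains its maximum. Then (i) $\lim_{n\to\infty}\mathcal{M}(n)/n=\dfrac{\sqrt{13}-2}{3}=0.53518\dots$; (ii) $\lim_{n\to\infty}E^{PD,P}_n(\mathcal{M}(n))=\dfrac{13\sqrt{13}-35}{27}=0.4397\dots$.
   Context: $E^{PD,P}_n(r)$ is the expected payoff, in the Postdoc secretary problem (goal: select the overall second best of $n$ randomly ordered candidates) with payoff $1+k/n$ when the accepted $k$-th candidate is the overall second best, of the strategy that rejects the first $r$ candidates and then accepts the first candidate which is second best among those seen so far. *)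

(* Defs.v *)
From HB Require Import structures.
From mathcomp Require Import all_boot all_order all_algebra.
From mathcomp Require Import all_classical all_reals all_analysis.
Set Implicit Arguments. Unset Strict Implicit. Unset Printing Implicit Defensive.
Import Order.TTheory GRing.Theory Num.Theory.
Local Open Scope ring_scope.

(* Expected payoff E^{PD,P}_n(r) of the Postdoc rule (reject the first r,
   then accept the first relatively-second-best), as defined by the sum
   sum_{k=r+1}^n (1 + k/n) * r/((k-1)k) * C(k,2)/C(n,2). *)
Definition EPDP (R : realType) (n r : nat) : R :=
  \sum_(r.+1 <= k < n.+1)
     (1 + k%:R / n%:R) * (r%:R / ((k%:R - 1) * k%:R))
       * ('C(k, 2)%:R / 'C(n, 2)%:R).

Definition is_maximizer (R : realType) (M : nat -> nat) : Prop :=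
  forall n : nat, (2 < n)%N ->
    (1 < M n < n)%N /\
    forall r : nat, (1 < r < n)%N -> EPDP R n r <= EPDP R n (M n).

(* Main.v *)
Require Import Defs.
From HB Require Import structures.
From mathcomp Require Import all_boot all_order all_algebra.
From mathcomp Require Import all_classical all_reals all_analysis.
From mathcomp Require Import ring lra zify.
Import Order.TTheory GRing.Theory Num.Theory numFieldNormedType.Exports.
Local Open Scope classical_set_scope.
Local Open Scope ring_scope.

Lemma bin2_nat k : ('C(k, 2) * 2 = k * k.-1)%N.
Proof.
elim: k => [//|k IH]; rewrite binS bin1 /= mulnDl IH; case: k {IH} => //= k; lia.
Qed.

Lemma bin2_real (R : realType) k : ('C(k, 2)%:R : R) = k%:R * (k%:R - 1) / 2.
Proof.
have H : ('C(k, 2)%:R : R) * 2 = k%:R * (k.-1)%:R by rewrite -[RHS]natrM -bin2_nat natrM.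
case: k H => [|k] H; first by rewrite bin0n mul0r mul0r.
rewrite -(mulrK (x:=2) _ ('C(_,_)%:R)) ?unitfE ?pnatr_eq0 // H /=.
by rewrite -addn1 natrD addrK.
Qed.

Lemma sum_lin (R : realType) (N : R) (r m : nat) : N != 0 -> (r <= m)%N ->
  \sum_(r.+1 <= k < m.+1) (1 + k%:R / N) =
   (m%:R - r%:R) + (m%:R * (m%:R + 1) - r%:R * (r%:R + 1)) / (2 * N).
Proof.
move=> hN; elim: m => [|m IH].
  by rewrite leqn0 => /eqP ->; rewrite big_geq //; field.
rewrite leq_eqVlt => /orP [/eqP ->|]; first by rewrite big_geq //; field.
rewrite ltnS => hrm; rewrite big_nat_recr /= ?IH //.
rewrite -addn1 natrD; by field.
Qed.

Lemma neq_of_gt1 (R : realType) (x : R) : 1 < x -> (x - 1 != 0) /\ (x != 0).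
Proof. by move=> hx; split; [rewrite subr_eq0 gt_eqF | rewrite gt_eqF // (lt_trans ltr01)]. Qed.

Lemma EPDP_closed (R : realType) (n r : nat) : (1 <= r)%N -> (r <= n)%N -> (2 <= n)%N ->
  EPDP R n r = r%:R * (n%:R - r%:R) * (3 * n%:R + 1 + r%:R) / (2 * n%:R ^+ 2 * (n%:R - 1)).
Proof.
move=> hr hrn hn; rewrite /EPDP.
have hN : (1 : R) < n%:R by rewrite ltr1n.
have [hN1 hN0] := neq_of_gt1 _ _ hN.
rewrite (eq_big_nat _ _ (F2 := fun k : nat => (1 + k%:R / n%:R) * (r%:R / (n%:R * (n%:R - 1))))); last first.
  move=> k /andP [hk1 hk2].
  have hk : (1 : R) < k%:R by rewrite ltr1n; lia.
  have [hk3 hk4] := neq_of_gt1 _ _ hk.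
  by rewrite !bin2_real; field; rewrite hN1 hN0 hk3 hk4.
rewrite -mulr_suml /= sum_lin //; by field; rewrite hN1 hN0.
Qed.

Definition gg {R : realType} (z : R) := z * (1 - z) * (3 + z).

Lemma key (R : realType) (a t x y : R) :
  3 * a ^+ 2 + 4 * a = 3 -> 1/2 < a < 1 -> 0 < t <= 1/4 ->
  0 <= x <= 1 -> 0 <= y <= 1 -> a - t < y <= a ->
  y * (1 - y) * (3 + y + t) / (2 * (1 - t)) <= x * (1 - x) * (3 + x + t) / (2 * (1 - t)) ->
  (x - a) ^+ 2 <= 3 * t /\
  (x * (1 - x) * (3 + x + t) / (2 * (1 - t)) - gg a / 2) ^+ 2 <= 3 * t.
Proof.
move=> ha /andP [ha1 ha2] /andP [ht1 ht2] /andP [hx1 hx2] /andP [hy1 hy2] /andP [hya1 hya2] hE.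
have iden z : gg a - gg z = (z - a) ^+ 2 * (z + 2 + 2 * a).
  have -> : gg a - gg z = (z - a) ^+ 2 * (z + 2 + 2 * a) + (z - a) * (3 * a ^+ 2 + 4 * a - 3)
    by rewrite /gg; ring.
  by rewrite ha subrr mulr0 addr0.
have q0 : 0 < 2 * (1 - t) by lra.
have hH : y * (1 - y) * (3 + y + t) <= x * (1 - x) * (3 + x + t).
  by move: hE; rewrite ler_pM2r // invr_gt0.
have gx : gg x <= gg a - 2 * (x - a) ^+ 2.
  have := iden x; have : 0 <= (x - a) ^+ 2 * (x + 2 * a) by apply: mulr_ge0; [apply: sqr_ge0| lra].
  lra.
have ya2 : (y - a) ^+ 2 <= t ^+ 2 by nra.
have gy : gg a - 5 * t ^+ 2 <= gg y.
  have := iden y; have : (y - a) ^+ 2 * (y + 2 + 2 * a) <= t ^+ 2 * 5.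
    apply: ler_pM => //; [apply: sqr_ge0 | lra | lra].
  lra.
have p1 (z : R) : 0 <= z <= 1 -> 0 <= z * (1 - z) <= 1/4.
  move=> /andP [z1 z2]; apply/andP; split; first by apply: mulr_ge0; lra.
  have : 0 <= (z - 1/2) ^+ 2 by apply: sqr_ge0.
  have -> : z * (1 - z) = 1/4 - (z - 1/2) ^+ 2 by field.
  lra.
have p2 (z : R) : z * (1 - z) * (3 + z + t) = gg z + t * (z * (1 - z)) by rewrite /gg; ring.
have hx : gg x <= x * (1 - x) * (3 + x + t) <= gg x + t / 4.
  rewrite p2; have /andP [u1 u2] := p1 x (introT andP (conj hx1 hx2)).
  apply/andP; split; nra.
have hy : gg y <= y * (1 - y) * (3 + y + t).
  rewrite p2; have /andP [u1 u2] := p1 y (introT andP (conj hy1 hy2)); nra.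
have ga : 0 <= gg a <= 1.
  have /andP [u1 u2] : 0 <= a * (1 - a) <= 1/4 by apply: p1; lra.
  rewrite /gg; apply/andP; split; nra.
have tt : t ^+ 2 <= t / 4 by rewrite expr2; nra.
split; first lra.
set H := x * (1 - x) * (3 + x + t).
have -> : H / (2 * (1 - t)) - gg a / 2 = (H - gg a + gg a * t) * (2 * (1 - t))^-1.
  field; lra.
set q := (2 * (1 - t))^-1.
have hq : 0 < q <= 2/3.
  have qq : q * (2 * (1 - t)) = 1 by rewrite /q mulVf // gt_eqF.
  have q1 : 0 < q by rewrite /q invr_gt0.
  rewrite q1 /=; nra.
have gt : 0 <= gg a * t <= t.
  move: ga => /andP [g1 g2]; apply/andP; split; first by apply: mulr_ge0; lra.
  rewrite -subr_ge0 -{1}(mul1r t) -mulrBl; apply: mulr_ge0; lra.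
have sx := sqr_ge0 (x - a).
move: hx => /andP [hh1 hh2].
have hD1 : - (5/4 * t) <= H - gg a + gg a * t <= 5/4 * t.
  move: gt => /andP [gt1 gt2]; apply/andP; split; rewrite /H; lra.
have hD : (H - gg a + gg a * t) ^+ 2 <= (5/4 * t) ^+ 2.
  move: hD1 => /andP [d1 d2].
  have : 0 <= (5/4 * t - (H - gg a + gg a * t)) * (5/4 * t + (H - gg a + gg a * t)).
    by apply: mulr_ge0; lra.
  rewrite !expr2; lra.
rewrite exprMn.
have q2 : q ^+ 2 <= 4/9.
  move: hq => /andP [q1 q2]; rewrite expr2; nra.
have : (H - gg a + gg a * t) ^+ 2 * q ^+ 2 <= (5/4 * t) ^+ 2 * (4/9).
  apply: ler_pM => //; apply: sqr_ge0.
have : (5/4 * t) ^+ 2 * (4/9) <= t ^+ 2 by rewrite expr2 expr2; nra.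
lra.
Qed.

Lemma cvg_sq (R : realType) (u : nat -> R) (l K : R) (N0 : nat) :
  (forall n, (N0 <= n)%N -> n%:R * (u n - l) ^+ 2 <= K) -> u @ \oo --> l.
Proof.
move=> hu; apply/cvgrPdist_lt => e he.
have e2 : 0 < e ^+ 2 by rewrite exprn_gt0.
have ce : e ^+ 2 * (e ^+ 2)^-1 = 1 by rewrite mulfV // gt_eqF.
have ci : 0 < (e ^+ 2)^-1 by rewrite invr_gt0.
near=> n.
have h1 : (N0 <= n)%N by near: n; exact: nbhs_infty_ge.
have h2 : (`|K| + 1) * (e ^+ 2)^-1 <= n%:R by near: n; exact: nbhs_infty_ger.
have h3 := hu n h1.
have h4 : `|K| + 1 <= n%:R * e ^+ 2.
  have := ler_wpM2r (ltW e2) h2.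
  by rewrite -mulrA [_^-1 * _]mulrC ce mulr1.
have hK := ler_norm K.
have hn : 0 < n%:R :> R.
  have := normr_ge0 K; have : 0 < (`|K| + 1) * (e ^+ 2)^-1 by apply: mulr_gt0 => //; lra.
  lra.
have hd : (u n - l) ^+ 2 < e ^+ 2.
  rewrite -(ltr_pM2l hn); lra.
rewrite distrC ltr_norml; apply/andP; split; nra.
Unshelve. all: by end_near.
Qed.

Lemma EPDP_x (R : realType) (n r : nat) : (1 <= r)%N -> (r <= n)%N -> (2 <= n)%N ->
  EPDP R n r = (r%:R / n%:R) * (1 - r%:R / n%:R) * (3 + r%:R / n%:R + n%:R^-1)
                / (2 * (1 - n%:R^-1)).
Proof.
move=> hr hrn hn; rewrite EPDP_closed //.
have hN : (1 : R) < n%:R by rewrite ltr1n.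
have [hN1 hN0] := neq_of_gt1 _ _ hN.
by field; rewrite hN0 hN1.
Qed.

Lemma bounds (R : realType) (M : nat -> nat) (a : R) (n : nat) :
  is_maximizer R M -> 3 * a ^+ 2 + 4 * a = 3 -> 1/2 < a < 1 -> (4 <= n)%N ->
  n%:R * ((M n)%:R / n%:R - a) ^+ 2 <= 3 /\
  n%:R * (EPDP R n (M n) - gg a / 2) ^+ 2 <= 3.
Proof.
move=> hM ha /andP [ha1 ha2] hn.
have [/andP [hm1 hm2] hmax] := hM n ltac:(lia).
set m := M n in hm1 hm2 hmax *.
set N : R := n%:R.
have hN4 : 4 <= N by rewrite /N (ler_nat R 4 n).
have aN0 : 0 <= a * N by apply: mulr_ge0; lra.
set r0 := Num.truncn (a * N).
have /andP [r1 r2] := truncn_itv aN0.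
have hr0 : (1 < r0 < n)%N.
  apply/andP; split.
    have : (2%:R : R) < r0.+1%:R by nra.
    by rewrite ltr_nat.
  have : (r0%:R : R) < n%:R by rewrite -/N; nra.
  by rewrite ltr_nat.
have hE := hmax r0 hr0.
rewrite !EPDP_x in hE *; try lia.
have N0 : N != 0 by rewrite gt_eqF //; lra.
set t := N^-1 in hE *.
have tN : t * N = 1 by rewrite mulVf.
have ht : 0 < t <= 1/4.
  have t0 : 0 < t by rewrite invr_gt0; lra.
  rewrite t0 /=; nra.
set x := m%:R / N in hE *.
set y := r0%:R / N in hE.
have xN : x * N = m%:R by rewrite mulfVK.
have yN : y * N = r0%:R by rewrite mulfVK.
have hmN : (m%:R : R) <= N by rewrite ler_nat; lia.
have hr0N : (r0%:R : R) <= N by rewrite ler_nat; lia.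
have hx : 0 <= x <= 1 by apply/andP; split; [apply: divr_ge0 | nra].
have hy : 0 <= y <= 1 by apply/andP; split; [apply: divr_ge0 | nra].
have hya : a - t < y <= a by apply/andP; split; nra.
have [k1 k2] := @key R a t x y ha (introT andP (conj ha1 ha2)) ht hx hy hya hE.
have N0' : 0 <= N by lra.
split.
  by apply: le_trans (ler_wpM2l N0' k1) _; rewrite mulrCA [N * t]mulrC tN mulr1.
by apply: le_trans (ler_wpM2l N0' k2) _; rewrite mulrCA [N * t]mulrC tN mulr1.
Qed.

Theorem theorem10 (R : realType) (M : nat -> nat) :
  is_maximizer R M ->
  ((fun n : nat => (M n)%:R / n%:R : R) @ \oo --> ((Num.sqrt 13 - 2) / 3 : R)) /\
  ((fun n : nat => EPDP R n (M n)) @ \oo --> ((13 * Num.sqrt 13 - 35) / 27 : R)).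
Proof.
move=> hM.
have s0 : 0 <= Num.sqrt (13 : R) := sqrtr_ge0 _.
have s2 : Num.sqrt (13 : R) ^+ 2 = 13 by rewrite sqr_sqrtr.
set s := Num.sqrt (13 : R) in s0 s2 *.
set a := (s - 2) / 3.
have ha : 3 * a ^+ 2 + 4 * a = 3.
  have -> : 3 * a ^+ 2 + 4 * a = (s ^+ 2 - 4) / 3 by rewrite /a; field.
  by rewrite s2; field.
have ha12 : 1/2 < a < 1.
  have s35 : 7/2 < s < 5 by apply/andP; split; nra.
  rewrite /a; apply/andP; split; lra.
have gl : gg a / 2 = (13 * s - 35) / 27.
  apply/eqP; rewrite -subr_eq0.
  have -> : gg a / 2 - (13 * s - 35) / 27 = - (s * (s ^+ 2 - 13)) / 54 by rewrite /gg /a; field.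
  by rewrite s2 subrr mulr0 oppr0 mul0r.
split.
  apply: (@cvg_sq R _ a 3 4) => n hn.
  by case: (@bounds R M a n hM ha ha12 hn).
rewrite -gl; apply: (@cvg_sq R _ (gg a / 2) 3 4) => n hn.
by case: (@bounds R M a n hM ha ha12 hn).
Qed.
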